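(* Let $k\ge 1$ be an integer and let $G$ be a bipartite graph with bipartition $V(G)=A\cup B$, $|A|=k$, $|B|=k+1$, such that every $v\in A$ has $\deg(v)\ge 1$ and $\deg(v)>\deg(u)$ for every $u\in N(v)$. Then $G=K_{k,k+1}$ (i.e., every vertex of $A$ is adjacent to every vertex of $B$).
   Context: Degrees and neighborhoods $N(v)$ are taken in $G$. *)

(* Defs.v *)
From mathcomp Require Import all_boot.
Set Implicit Arguments. Unset Strict Implicit. Unset Printing Implicit Defensive.

Definition simple_graph (T : finType) (e : rel T) : Prop :=
  symmetric e /\ irreflexive e.

Definition nbhd (T : finType) (e : rel T) (v : T) : {set T} := [set u | e v u].
Definition deg (T : finType) (e : rel T) (v : T) : nat := #|nbhd e v|.

Definition bipartition (T : finType) (e : rel T) (A B : {set T}) : Prop :=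
  [/\ [disjoint A & B], A :|: B = [set: T] &
      forall u v, e u v -> (u \in A) = (v \in B)].

(* Main.v *)
Require Import Defs.
From mathcomp Require Import all_boot.
From mathcomp Require Import all_order all_algebra.
From mathcomp Require Import ring lra zify.
Import Order.TTheory GRing.Theory Num.Theory.

Local Open Scope ring_scope.

Lemma invle (x y : rat) : 0 < x -> x <= y -> y^-1 <= x^-1.
Proof. move=> x0 xy; rewrite lef_pV2 // posrE; lra. Qed.

Lemma invlt (x y : rat) : 0 < x -> x < y -> y^-1 < x^-1.
Proof. move=> x0 xy; rewrite ltf_pV2 // posrE; lra. Qed.

Lemma key (x : rat) : 2 <= x -> x * ((x - 1)^-1 - x^-1) = (x - 1)^-1.
Proof.
move=> hx; have h1 : x != 0 by rewrite gt_eqF //; lra.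
have h2 : x - 1 != 0 by rewrite gt_eqF //; lra.
by field; rewrite h1 h2.
Qed.

Local Close Scope ring_scope.

Theorem lemma3p3 (k : nat) (T : finType) (e : rel T) (A B : {set T}) :
  1 <= k ->
  simple_graph e ->
  bipartition e A B ->
  #|A| = k -> #|B| = k.+1 ->
  (forall v, v \in A -> 1 <= deg e v) ->
  (forall v u, v \in A -> u \in nbhd e v -> deg e u < deg e v) ->
  forall a b, a \in A -> b \in B -> e a b.
Proof.
move=> k1 [hsym eirr] [dis cov bip] cA cB degA degl a0 b0 a0A b0B.
apply/negPn/negP => nab.
have inB : forall a u, a \in A -> e a u -> u \in B.
  by move=> a u aA eau; rewrite -(bip _ _ eau).
have BnA : forall b, b \in B -> b \notin A.
  by move=> b bB; rewrite (disjointFl dis bB).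
have inA : forall b u, b \in B -> e b u -> u \in A.
  move=> b u bB ebu; have := bip _ _ ebu; rewrite (negbTE (BnA _ bB)).
  move=> /esym uB; have : u \in [set: T] by rewrite in_setT.
  by rewrite -cov in_setU uB orbF.
have nbE : forall v u, (u \in nbhd e v) = e v u by move=> v u; rewrite inE.
have degB : forall a, a \in A -> deg e a <= k.+1.
  move=> a aA; rewrite -cB; apply: subset_leq_card; apply/subsetP => u.
  by rewrite nbE; apply: inB.
have dega0 : deg e a0 <= k.
  have : #|B :\ b0| = k by move: (cardsD1 b0 B); rewrite b0B cB; lia.
  move=> <-; apply: subset_leq_card; apply/subsetP => u.
  rewrite nbE in_setD1 => eu; rewrite (inB _ _ a0A eu) andbT.
  by apply/eqP => ub; move: nab; rewrite -ub eu.
have degb1 : forall a b, a \in A -> e a b -> 1 <= deg e b.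
  move=> a b aA eab; apply/card_gt0P; exists a; by rewrite nbE hsym.
have dega2 : forall a b, a \in A -> e a b -> 2 <= deg e a.
  move=> a b aA eab; have := degl a b aA; rewrite nbE => /(_ eab).
  have := degb1 a b aA eab; lia.
Local Open Scope ring_scope.
pose d v := (deg e v)%:R : rat.
pose S1 := \sum_(a in A) \sum_(b | e a b) (d b)^-1.
pose S2 := \sum_(a in A) \sum_(b | e a b) (d a)^-1.
have hS2 : S2 = k%:R.
  rewrite /S2 -cA -sumr_const; apply: eq_bigr => a aA.
  have -> : \sum_(b | e a b) (d a)^-1 = \sum_(b in nbhd e a) (d a)^-1.
    by apply: eq_bigl => b; rewrite nbE.
  rewrite sumr_const -mulr_natl mulfV // /d pnatr_eq0 -lt0n; exact: degA.
have hS1 : S1 <= (k.+1)%:R.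
  rewrite /S1.
  have -> : \sum_(a in A) \sum_(b | e a b) (d b)^-1 =
            \sum_(a in A) \sum_b (if e a b then (d b)^-1 else 0).
    by apply: eq_bigr => a _; rewrite big_mkcond.
  rewrite exchange_big /=.
  rewrite -cB -sumr_const [X in _ <= X]big_mkcond /=; apply: ler_sum => b _.
  case: ifP => bB.
    rewrite -big_mkcondr /=.
    have -> : \sum_(i in A | e i b) (d b)^-1 = \sum_(i in nbhd e b) (d b)^-1.
      apply: eq_bigl => i; rewrite nbE hsym; apply/andP/idP => [[]//|h].
      by split=> //; apply: (inA b).
    rewrite sumr_const -mulr_natl /d.
    have [->|nz] := eqVneq (deg e b) 0%N.
      by rewrite invr0 mulr0 ler01.
    by rewrite mulfV // pnatr_eq0.
  rewrite big1 // => a aA; case: ifP => // eab.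
  by move: bB; rewrite (inB _ _ aA eab).
have low : forall a, a \in A ->
    (d a - 1)^-1 <= \sum_(b | e a b) (d b)^-1 - \sum_(b | e a b) (d a)^-1.
  move=> a aA; rewrite -sumrB.
  have [b eab] : exists b, e a b.
    by have /card_gt0P [b] := degA a aA; rewrite nbE; exists b.
  have d2 : 2 <= d a by rewrite /d (ler_nat _ 2); exact: (dega2 a b).
  rewrite -{1}(key (d a) d2).
  have -> : d a * ((d a - 1)^-1 - (d a)^-1) =
            \sum_(u | e a u) ((d a - 1)^-1 - (d a)^-1).
    have -> : \sum_(u | e a u) ((d a - 1)^-1 - (d a)^-1) =
              \sum_(u in nbhd e a) ((d a - 1)^-1 - (d a)^-1).
      by apply: eq_bigl => u; rewrite nbE.
    by rewrite sumr_const -mulr_natl.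
  apply: ler_sum => u eau; rewrite lerD2r.
  apply: invle.
    have := degb1 a u aA eau; rewrite /d -(ltr_nat rat) => h; exact: h.
  have := degl a u aA; rewrite nbE => /(_ eau) lt.
  rewrite /d lerBrDr -(natrD _ _ 1%N) ler_nat; lia.
have hsum : \sum_(a in A) (d a - 1)^-1 <= 1.
  apply: (@le_trans _ _ (S1 - S2)).
    rewrite /S1 /S2 -sumrB; apply: ler_sum => a aA; exact: low.
  rewrite hS2; move: hS1; rewrite -addn1 natrD; lra.
have [c cE] : exists c, k = (1 + c)%N.
  by exists #|A :\ a0|; rewrite -cA (cardsD1 a0 A) a0A.
have K0 : 0 < k%:R :> rat by rewrite ltr0n; lia.
have ge : forall a, a \in A -> (k%:R)^-1 <= (d a - 1)^-1.
  move=> a aA; have /card_gt0P [b] := degA a aA; rewrite nbE => eab.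
  apply: invle; first by rewrite subr_gt0 /d (ltr_nat _ 1); exact: (dega2 a b).
  have := degB a aA; rewrite -(ler_nat rat) -addn1 natrD /d; lra.
have gt0 : (k%:R)^-1 < (d a0 - 1)^-1.
  have /card_gt0P [b] := degA a0 a0A; rewrite nbE => eab.
  apply: invlt; first by rewrite subr_gt0 /d (ltr_nat _ 1); exact: (dega2 a0 b).
  move: dega0; rewrite -(ler_nat rat) /d; lra.
have : 1 < \sum_(a in A) (d a - 1)^-1.
  rewrite (bigD1 a0) //=.
  have h2 : \sum_(a in A :\ a0) (k%:R)^-1 <= \sum_(a in A | a != a0) (d a - 1)^-1.
    rewrite (eq_bigl (fun a => (a \in A) && (a != a0))); last first.
      by move=> a; rewrite in_setD1 andbC.
    by apply: ler_sum => a /andP [aA _]; exact: ge.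
  move: h2; rewrite sumr_const.
  have -> : #|A :\ a0| = c by move: (cardsD1 a0 A); rewrite a0A cA cE; lia.
  have h1 : (1 + c%:R) * (k%:R)^-1 = 1 :> rat.
    have -> : (1 + c%:R : rat) = k%:R by rewrite cE natrD.
    by rewrite mulfV // gt_eqF.
  rewrite -[_ *+ c]mulr_natl => h2; move: gt0 h1 h2; set K := (k%:R)^-1; move=> gt0 h1 h2.
  have : 1 = K + c%:R * K by rewrite -[LHS]h1 mulrDl mul1r.
  lra.
lra.
Qed.
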